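(* Let $m$ and $n$ be positive integers with $m=O(n^r)$, where $r\in\mathbb{R}$ and $r\ge 1$. For every pair of positive integers $k,\ell$ with $k\ge 3$, there exists a positive integer $N_3=N_3(k,\ell)$ such that $px_{k,\ell}(K_{m,n})=2$ for every integer $n\ge N_3$.
   Context: Here $m=m(n)$ is regarded as a function of $n$ with $m=O(n^r)$. All graphs are finite, simple and undirected; $K_{m,n}$ is the complete bipartite graph with parts of sizes $m$ and $n$. An edge-coloring of a graph may assign the same color to adjacent edges. A tree $T$ in an edge-colored graph is a proper tree if no two adjacent edges of $T$ receive the same color. For $S\subseteq V(G)$ with $|S|\ge 2$, an $S$-tree is a tree in $G$ containing all vertices of $S$. $S$-trees $T_1,\dots,T_\ell$ are internally disjoint if $E(T_i)\cap E(T_j)=\emptyset$ and $V(T_i)\cap V(T_j)=S$ for all $i\ne j$. For a connected graph $G$ of order $n$ and integers $k,\ell$ with $2\le k\le n$ and $1\le \ell\le \kappa_k(G)$ (where $\kappa_k(G)$ is the minimum, over all $k$-subsets $S$ of $V(G)$, of the maximum number of internally disjoint $S$-trees), the $(k,\ell)$-proper index $px_{k,\ell}(G)$ is the minimum number of colors in an edge-coloring of $G$ such that for every $k$-subset $S$ of $V(G)$ there exist $\ell$ internally disjoint proper $S$-trees. *)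

(* Defs.v *)
From mathcomp Require Import all_boot.
From Stdlib Require Import Reals.
Set Implicit Arguments. Unset Strict Implicit. Unset Printing Implicit Defensive.

(* A finite simple graph on a finType T is given by its edge set E, a set of
   2-element subsets of T. An edge-coloring is a function c on edges (its
   values off E are irrelevant). *)
Section Graphs.
Variable T : finType.

Definition simple_graph (E : {set {set T}}) : Prop :=
  forall e, e \in E -> #|e| = 2.

Definition adj_of (F : {set {set T}}) : rel T := fun x y => [set x; y] \in F.

Definition is_tree (E : {set {set T}}) (V : {set T}) (F : {set {set T}}) : Prop :=
  [/\ V != set0,
      F \subset E,
      (forall e, e \in F -> e \subset V),
      (forall x y, x \in V -> y \in V -> connect (adj_of F) x y) &
      ~ (exists s : seq T, [/\ 2 < size s, uniq s & cycle (adj_of F) s])].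

Definition proper_tree (c : {set T} -> nat) (F : {set {set T}}) : Prop :=
  forall e1 e2, e1 \in F -> e2 \in F -> e1 != e2 -> e1 :&: e2 != set0 ->
    c e1 <> c e2.

Definition kl_good (E : {set {set T}}) (k l : nat) (c : {set T} -> nat) : Prop :=
  forall S : {set T}, #|S| = k ->
    exists (V : 'I_l -> {set T}) (F : 'I_l -> {set {set T}}),
      [/\ (forall i, is_tree E (V i) (F i)),
          (forall i, S \subset V i),
          (forall i, proper_tree c (F i)) &
          (forall i j, i != j -> F i :&: F j = set0 /\ V i :&: V j = S)].

Definition coloring_with (E : {set {set T}}) (q : nat) (c : {set T} -> nat) : Prop :=
  forall e, e \in E -> c e < q.

Definition px_eq (E : {set {set T}}) (k l p : nat) : Prop :=
  (exists c, coloring_with E p c /\ kl_good E k l c) /\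
  (forall q, q < p -> ~ exists c, coloring_with E q c /\ kl_good E k l c).

End Graphs.

Definition K_edges (m n : nat) : {set {set ('I_m + 'I_n)%type}} :=
  [set [set inl i; inr j] | i : 'I_m, j : 'I_n].

Definition bigO_pow (m : nat -> nat) (r : R) : Prop :=
  exists (C : R) (N0 : nat), (0 < C)%R /\
    forall n : nat, (N0 <= n)%N -> (0 < n)%N ->
      (INR (m n) <= C * Rpower (INR n) r)%R.

(* Main.v *)
Require Import Defs.
From mathcomp Require Import all_boot zify.
From Stdlib Require Import Reals.
Set Implicit Arguments. Unset Strict Implicit. Unset Printing Implicit Defensive.

Lemma count_iota_odd (b : bool) N a : N./2 <= count (fun x => odd x == b) (iota a N).
Proof.
elim: N {-2}N (leqnn N) a => [|K IH] N hN a.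
  by have -> : N = 0 by lia.
case: N hN => [|[|N]] hN //=.
have := IH N ltac:(lia) a.+2.
destruct (odd a); destruct b; simpl; lia.
Qed.

Lemma count_AnB (T : eqType) (P Q : pred T) s : count P s - count Q s <= count (fun x => P x && ~~ Q x) s.
Proof. elim: s => //= x s IH; case: (P x); case: (Q x) => /=; lia. Qed.

Lemma count_card (T : finType) (Q : pred T) : count Q (enum T) = #|Q|.
Proof. by rewrite enumT cardE /enum_mem size_filter. Qed.

Lemma count_ord_odd N b : N./2 <= count (fun x : 'I_N => odd x == b) (enum 'I_N).
Proof.
have := count_iota_odd b N 0.
by rewrite -val_enum_ord count_map.
Qed.

Lemma size_fresh N (b : bool) (bad : pred 'I_N) :
  N./2 - #|bad| <= size [seq a : 'I_N <- enum 'I_N | (odd a == b) && ~~ bad a].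
Proof.
rewrite size_filter.
apply: leq_trans (count_AnB (fun x : 'I_N => odd x == b) bad (enum 'I_N)).
rewrite [count bad _]count_card.
exact: leq_sub2r (count_ord_odd N b).
Qed.
Lemma divmod_eq i j q q' (K : nat) : q < K -> q' < K -> i * K + q = j * K + q' -> i = j /\ q = q'.
Proof. move=> h1 h2 h3. have e : i = j by nia. split => //. subst. lia. Qed.

Lemma mul_lt i q l (K : nat) : i < l -> q < K -> i * K + q < l * K.
Proof. move=> h1 h2. nia. Qed.

Lemma nth_inj (T : eqType) (x0 : T) s i j : i < size s -> j < size s -> uniq s ->
  nth x0 s i = nth x0 s j -> i = j.
Proof. by move=> hi hj hu /eqP; rewrite nth_uniq // => /eqP. Qed.

Lemma arith1 u K (b1 b2 : bool) : u < K -> 8 * u + (2 * b1 + b2) < 8 * K.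
Proof. by case: b1; case: b2 => /=; lia. Qed.

Lemma arith2 u (b1 b2 : bool) : [&& (8*u + (2*b1+b2)) %% 8 < 4, b2 == odd (8*u+(2*b1+b2)) & b1 == odd (8*u+(2*b1+b2))./2].
Proof. by case: b1; case: b2; apply/and3P; split; apply/eqP => //=; lia. Qed.

Section Constr.
Variables (M n l : nat) (dA : 'I_M) (dB : 'I_n).
Local Notation T := ('I_M + 'I_n)%type.
Variable SS : {set T}.
Hypothesis Sgt0 : 0 < #|SS|.

Definition isB (x : T) : bool := if x is inr _ then true else false.
Definition wt (x : T) : nat := match x with inl a => nat_of_ord a | inr b => nat_of_ord b end.
Definition LA (b : bool) := [seq a : 'I_M <- enum 'I_M | (odd a == b) && ~~ (fun a => inl a \in SS) a].
Definition LB (b : bool) := [seq a : 'I_n <- enum 'I_n | (odd a == b) && ~~ (fun a => inr a \in SS) a].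
Definition L := 8 * #|SS|.
Hypothesis hLA : forall b, l * L <= size (LA b).
Hypothesis hLB : forall b, l * L <= size (LB b).
Definition fresh (i q : nat) : T :=
  if odd q then inr (nth dB (LB (odd q./2)) (i * L + q))
  else inl (nth dA (LA (odd q./2)) (i * L + q)).
Definition scand q := nth (inr dB) (enum SS) (q %/ 8).
Definition sslot q := [&& q %% 8 < 4, isB (scand q) == odd q & odd (wt (scand q)) == odd q./2].
Definition pv i q := if sslot q then scand q else fresh i q.

Lemma fresh_props i q : i < l -> q < L ->
  [/\ isB (fresh i q) = odd q, odd (wt (fresh i q)) = odd q./2 & fresh i q \notin SS].
Proof.
move=> il qL.
have hi : i * L + q < l * L by apply: mul_lt.
rewrite /fresh; case: (odd q) => /=.
  have := hLB (odd q./2).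
  set s := LB _ => hs.
  have : nth dB s (i * L + q) \in s by apply: mem_nth; exact: leq_trans hi hs.
  by rewrite mem_filter => /andP [/andP [/eqP -> ->]].
have := hLA (odd q./2).
set s := LA _ => hs.
have : nth dA s (i * L + q) \in s by apply: mem_nth; exact: leq_trans hi hs.
by rewrite mem_filter => /andP [/andP [/eqP -> ->]].
Qed.

Lemma scand_in q : q < L -> scand q \in SS.
Proof.
move=> qL; rewrite /scand -mem_enum; apply: mem_nth.
have h : q %/ 8 < #|SS| by rewrite /L in qL; lia.
by rewrite cardE in h.
Qed.

Lemma pv_props i q : i < l -> q < L -> isB (pv i q) = odd q /\ odd (wt (pv i q)) = odd q./2.
Proof.
move=> il qL; rewrite /pv; case hs: (sslot q).
  by move: hs => /and3P [_ /eqP -> /eqP ->].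
by case: (fresh_props il qL).
Qed.

Lemma pv_inS i q : i < l -> q < L -> (pv i q \in SS) = sslot q.
Proof.
move=> il qL; rewrite /pv; case hs: (sslot q); first exact: scand_in.
by case: (fresh_props il qL) => _ _ /negbTE.
Qed.

Lemma fresh_inj i j q q' : i < l -> j < l -> q < L -> q' < L ->
  fresh i q = fresh j q' -> i = j /\ q = q'.
Proof.
move=> il jl qL qL' e.
case: (fresh_props il qL) (fresh_props jl qL') => h1 h2 _ [h1' h2' _].
have o1 : odd q = odd q' by rewrite -h1 -h1' e.
have o2 : odd q./2 = odd q'./2 by rewrite -h2 -h2' e.
have hi : i * L + q < l * L by apply: mul_lt.
have hj : j * L + q' < l * L by apply: mul_lt.
suff : i * L + q = j * L + q' by apply: divmod_eq.
move: e; rewrite /fresh -o1 -o2; case: (odd q) => [[]|[]].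
  apply: nth_inj; [exact: leq_trans hi (hLB _) | exact: leq_trans hj (hLB _) |].
  by rewrite filter_uniq // enum_uniq.
apply: nth_inj; [exact: leq_trans hi (hLA _) | exact: leq_trans hj (hLA _) |].
by rewrite filter_uniq // enum_uniq.
Qed.

Lemma pv_inj i q q' : i < l -> q < L -> q' < L -> pv i q = pv i q' -> q = q'.
Proof.
move=> il qL qL' e.
have hs := pv_inS il qL; have hs' := pv_inS il qL'.
rewrite e in hs.
have es : sslot q = sslot q' by rewrite -hs -hs'.
move: e; rewrite /pv; case h: (sslot q); case h': (sslot q') => e.
- move: h h' => /and3P [h1 /eqP h2 /eqP h3] /and3P [h1' /eqP h2' /eqP h3'].
  have hu : q %/ 8 = q' %/ 8.
    move: e; rewrite /scand; apply: nth_inj; last exact: enum_uniq.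
      have h : q %/ 8 < #|SS| by rewrite /L in qL; lia.
      by rewrite cardE in h.
    have h : q' %/ 8 < #|SS| by rewrite /L in qL'; lia.
    by rewrite cardE in h.
  rewrite /scand hu in h2 h3; rewrite /scand in h2' h3'.
  rewrite h2 in h2'; rewrite h3 in h3'.
  lia.
- by rewrite es h' in h.
- by rewrite es h' in h.
- by case: (fresh_inj il il qL qL' e).
Qed.

Lemma pv_cross i j q q' : i < l -> j < l -> q < L -> q' < L ->
  pv i q = pv j q' -> pv i q \notin SS -> i = j.
Proof.
move=> il jl qL qL' e; rewrite (pv_inS il qL) => /negbTE h.
have := pv_inS jl qL'; rewrite -e (pv_inS il qL) h => /esym h'.
move: e; rewrite /pv h h' => e.
by case: (fresh_inj il jl qL qL' e).
Qed.

Lemma pv_surj i s : s \in SS -> exists2 q, q < L & pv i q = s.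
Proof.
move=> sS.
have hu : index s (enum SS) < #|SS| by rewrite cardE index_mem mem_enum.
set u := index s (enum SS) in hu.
exists (8 * u + (2 * odd (wt s) + isB s)); first exact: arith1.
have hsc : scand (8 * u + (2 * odd (wt s) + isB s)) = s.
  rewrite /scand.
  have -> : (8 * u + (2 * odd (wt s) + isB s)) %/ 8 = u by case: (odd (wt s)); case: (isB s) => /=; lia.
  by rewrite nth_index // mem_enum.
rewrite /pv /sslot hsc.
by rewrite /pv /sslot ?hsc arith2.
Qed.

Definition V i := [set pv i q | q : 'I_L].
Definition ep i q : {set T} := [set pv i q; pv i q.+1].
Definition F i := [set ep i q | q : 'I_L.-1].
Definition col (e : {set T}) : nat := odd (\sum_(x in e) wt x).

Lemma pv_neq i q : i < l -> q.+1 < L -> pv i q != pv i q.+1.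
Proof. move=> il qL; apply/eqP => /(pv_inj il) h. have := h ltac:(lia) qL. lia. Qed.

Lemma col_ep i q : i < l -> q.+1 < L -> col (ep i q) = odd q.
Proof.
move=> il qL.
rewrite /col /ep big_setU1 /=; last by rewrite in_set1 pv_neq.
rewrite big_set1 oddD.
case: (pv_props il (ltnW qL)) => _ ->; case: (pv_props il qL) => _ ->.
by rewrite -oddD; congr (nat_of_bool (odd _)); lia.
Qed.

Lemma ep_edge i q : i < l -> q.+1 < L -> ep i q \in K_edges M n.
Proof.
move=> il qL.
case: (pv_props il (ltnW qL)) => h1 _; case: (pv_props il qL) => h2 _.
rewrite /ep; move: h1 h2 => /=.
case: (pv i q) => [a|b]; case: (pv i q.+1) => [a'|b'] /=.
- by move=> <-.
- by move=> _ _; apply/imset2P; exists a b'.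
- by move=> _ _; rewrite setUC; apply/imset2P; exists a' b.
- by move=> <-; case: (odd q).
Qed.

Lemma L_gt0 : 0 < L.
Proof. rewrite /L; lia. Qed.

Lemma ltpred q : q < L.-1 -> q.+1 < L.
Proof. have := L_gt0; lia. Qed.

Lemma inF i e : e \in F i -> exists2 q, q.+1 < L & e = ep i q.
Proof. by case/imsetP => q _ ->; exists q => //; apply: ltpred. Qed.

Lemma inV i x : x \in V i -> exists2 q, q < L & x = pv i q.
Proof. by case/imsetP => q _ ->; exists q. Qed.

Lemma pv_V i q : q < L -> pv i q \in V i.
Proof. by move=> qL; apply/imsetP; exists (Ordinal qL). Qed.

Lemma ep_F i q : q.+1 < L -> ep i q \in F i.
Proof.
move=> qL; have qL' : q < L.-1 by lia.
by apply/imsetP; exists (Ordinal qL').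
Qed.

Lemma in_ep i q x : x \in ep i q -> x = pv i q \/ x = pv i q.+1.
Proof. by rewrite /ep in_set2 => /orP [] /eqP ->; [left|right]. Qed.

Lemma adj_sym' (F0 : {set {set T}}) : symmetric (adj_of F0).
Proof. by move=> x y; rewrite /adj_of setUC. Qed.

Lemma conn0 i q : q < L -> connect (adj_of (F i)) (pv i 0) (pv i q).
Proof.
elim: q => [|q IH] qL; first exact: connect0.
apply: connect_trans (IH (ltnW qL)) (connect1 _).
exact: ep_F.
Qed.

Lemma adj_inv i x y : i < l -> adj_of (F i) x y -> x != y ->
  exists2 q, q.+1 < L & ((x = pv i q /\ y = pv i q.+1) \/ (x = pv i q.+1 /\ y = pv i q)).
Proof.
move=> il /inF [q qL e] nxy; exists q => //.
have : x \in ep i q by rewrite -e set21.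
have : y \in ep i q by rewrite -e set22.
move=> /in_ep [] ey /in_ep [] ex; subst x y.
- by rewrite eqxx in nxy.
- by right.
- by left.
- by rewrite eqxx in nxy.
Qed.

Definition ix i x := odflt 0 (omap val [pick q : 'I_L | pv i q == x]).

Lemma ix_pv i q : i < l -> q < L -> ix i (pv i q) = q.
Proof.
move=> il qL; rewrite /ix; case: pickP => [q' /eqP h|h] /=.
  exact: (pv_inj il (ltn_ord q') qL h).
by have := h (Ordinal qL); rewrite eqxx.
Qed.

Lemma acyclic i : i < l ->
  ~ (exists s : seq T, [/\ 2 < size s, uniq s & cycle (adj_of (F i)) s]).
Proof.
move=> il [s [hs hu hc]].
have [x0 x0s] : exists x0, x0 \in s by case: s hs {hu hc} => // a ? _; exists a; rewrite inE eqxx.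
case: (@arg_maxnP _ x0 (mem s) (ix i) x0s) => x xs xmax.
case: (rot_to xs) => k s' hrot.
have hc' : cycle (adj_of (F i)) (x :: s') by rewrite -hrot rot_cycle.
have hu' : uniq (x :: s') by rewrite -hrot rot_uniq.
have hsz : size (x :: s') = size s by rewrite -hrot size_rot.
have ins : forall y, y \in x :: s' -> y \in s by move=> y; rewrite -hrot mem_rot.
clear hrot.
case: s' hc' hu' hsz ins => [|y t] hc' hu' hsz ins; first by rewrite -hsz in hs.
case/lastP: t hc' hu' hsz ins => [|t' z] hc' hu' hsz ins; first by rewrite -hsz in hs.
move: hc'; rewrite /= rcons_path last_rcons => /andP [exy /andP [_ ezx]].
move: hu'; rewrite /= !inE mem_rcons !inE negb_or => /andP [/andP [nxy /norP [nxz _]] /andP [nyz _]].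
have ys : y \in s by apply: ins; rewrite !inE eqxx orbT.
have zs : z \in s by apply: ins; rewrite !inE mem_rcons !inE eqxx !orbT.
have hy := xmax y ys; have hz := xmax z zs.
have nzx : z != x by rewrite eq_sym.
clear hs hsz ins hu hc.
case: (adj_inv il exy nxy) => q qL [[ex ey]|[ex ey]].
  move: hy; rewrite ex ey !ix_pv //= ?ltnn //; exact: ltnW.
case: (adj_inv il ezx nzx) => q' qL' [[ez ex']|[ez ex']].
  have hq : q = q'.
    have := pv_inj il qL qL'; rewrite -ex -ex' => h; by case: (h erefl).
  by move: nyz; rewrite ey ez hq mem_rcons inE eqxx.
move: hz; rewrite ez ex' !ix_pv //= ?ltnn //; exact: ltnW.
Qed.

Lemma tree_ok i : i < l -> is_tree (K_edges M n) (V i) (F i).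
Proof.
move=> il; split.
- by apply/set0Pn; exists (pv i 0); apply: pv_V; exact: L_gt0.
- by apply/subsetP => e /inF [q qL ->]; apply: ep_edge.
- move=> e /inF [q qL ->]; apply/subsetP => x /in_ep [] ->; apply: pv_V => //; lia.
- move=> x y /inV [qx qxL ->] /inV [qy qyL ->].
  apply: connect_trans _ (@conn0 i qy qyL); rewrite (sym_connect_sym (@adj_sym' _)).
  exact: conn0.
- exact: acyclic.
Qed.

Lemma proper_ok i : i < l -> proper_tree col (F i).
Proof.
move=> il e1 e2 /inF [q1 q1L ->] /inF [q2 q2L ->] hne /set0Pn [x /setIP [x1 x2]].
rewrite !col_ep //.
have nq : q1 != q2 by apply: contraNneq hne => ->.
case: (in_ep x1) => h1; case: (in_ep x2); rewrite h1 => h2.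
- by move: (pv_inj il (ltnW q1L) (ltnW q2L) h2) nq => ->; rewrite eqxx.
- have := pv_inj il (ltnW q1L) q2L h2; lia.
- have := pv_inj il q1L (ltnW q2L) h2; lia.
- by move: (pv_inj il q1L q2L h2) nq => [->]; rewrite eqxx.
Qed.

Lemma sslot_adj q : ~~ (sslot q && sslot q.+1).
Proof.
apply/negP => /andP [/and3P [a1 /eqP b1 _] /and3P [a2 /eqP b2 _]].
have h : q.+1 %/ 8 = q %/ 8 by lia.
rewrite /scand h in b2; rewrite /scand b2 in b1; lia.
Qed.

Lemma construct : exists (V' : 'I_l -> {set T}) (F' : 'I_l -> {set {set T}}),
      [/\ (forall i, is_tree (K_edges M n) (V' i) (F' i)),
          (forall i, SS \subset V' i),
          (forall i, proper_tree col (F' i)) &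
          (forall i j, i != j -> F' i :&: F' j = set0 /\ V' i :&: V' j = SS)].
Proof.
exists (fun i => V i), (fun i => F i); split.
- move=> i; exact: tree_ok.
- move=> i; apply/subsetP => x xS; case: (pv_surj i xS) => q qL <-; exact: pv_V.
- move=> i; exact: proper_ok.
move=> i j nij; have il := ltn_ord i; have jl := ltn_ord j.
have nij' : (i : nat) <> j by move=> h; move: nij; rewrite (val_inj h) eqxx.
split.
  apply/setP => e; rewrite inE in_set0; apply/negP => /andP [/inF [q qL ->] /inF [q' qL' e']].
  pose w := if sslot q then pv i q.+1 else pv i q.
  have wS : w \notin SS.
    rewrite /w; case h: (sslot q).
      by rewrite pv_inS //; move: (sslot_adj q); rewrite h.
    by rewrite pv_inS // ?h //; lia.
  have we : w \in ep i q by rewrite /w; case: (sslot q); rewrite /ep !inE eqxx ?orbT.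
  rewrite e' in we.
  have [qw qwL ew] : exists2 qw, qw < L & w = pv i qw.
    by rewrite /w; case: (sslot q); [exists q.+1 | exists q => //; lia].
  case: (in_ep we) => hw; rewrite ew in hw wS.
  + by apply: nij'; apply: (pv_cross il jl qwL (ltnW qL') hw wS).
  + by apply: nij'; apply: (pv_cross il jl qwL qL' hw wS).
apply/setP => x; rewrite inE; apply/andP/idP.
  move=> [/inV [q qL ->] /inV [q' qL' e]]; apply/negPn/negP => nS.
  by apply: nij'; apply: (pv_cross il jl qL qL' e nS).
move=> xS; split; [case: (pv_surj i xS) => q qL <- | case: (pv_surj j xS) => q qL <-]; exact: pv_V.
Qed.

End Constr.
Lemma card_pre (A B : finType) (f : A -> B) (finj : injective f) (SS : {set B}) :
  #|(fun a => f a \in SS)| <= #|SS|.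
Proof.
have -> : #|(fun a => f a \in SS)| = #|[set a | f a \in SS]| by rewrite cardsE.
rewrite -(card_imset _ finj); apply: subset_leq_card.
by apply/subsetP => b /imsetP [a]; rewrite inE => h ->.
Qed.

Lemma nomatch (T : finType) (E : {set {set T}}) (V : {set T}) (F : {set {set T}}) c x y z :
  is_tree E V F -> proper_tree c F -> (forall e, e \in F -> c e = 0) ->
  x \in V -> y \in V -> z \in V -> x != y -> x != z -> y != z -> False.
Proof.
case=> _ _ _ hconn _ hp h0 xV yV zV nxy nxz nyz.
case/connectP: (hconn x y xV yV) => p.
case: p => [|y1 p] /=; first by move=> _ ey; rewrite ey eqxx in nxy.
move=> /andP [a1 _] _.
set e := [set x; y1] in a1.
have key : forall e', e' \in F -> e' :&: e != set0 -> e' = e.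
  move=> e' he' hi; apply/eqP; apply/negPn/negP => ne.
  by apply: (hp e' e he' a1 ne hi); rewrite !h0.
have reach : forall v w, v \in e -> connect (adj_of F) v w -> w \in e.
  move=> v w ve /connectP [p' pp ->]; elim: p' v ve pp => [|a p' IH] v ve //= /andP [av pp].
  apply: (IH a) => //.
  have E1 : [set v; a] = e.
    apply: key => //; apply/set0Pn; exists v; by rewrite inE set21 ve.
  by rewrite -E1 set22.
have ye := reach x y (set21 _ _) (hconn _ _ xV yV).
have ze := reach x z (set21 _ _) (hconn _ _ xV zV).
move: ye ze; rewrite !in_set2 => ye ze.
have hy : y == y1 by move: ye; rewrite eq_sym (negbTE nxy).
have hz : z == y1 by move: ze; rewrite eq_sym (negbTE nxz).
by move: nyz; rewrite (eqP hy) (eqP hz) eqxx.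
Qed.

Lemma lower (M n k l : nat) : 3 <= k -> k <= M + n -> 0 < l -> 0 < M -> 0 < n ->
  forall q, q < 2 -> ~ exists c, coloring_with (K_edges M n) q c /\ kl_good (K_edges M n) k l c.
Proof.
move=> hk hkT hl hM hn q hq [c [hc hg]].
have eE : [set inl (Ordinal hM) ; inr (Ordinal hn)] \in K_edges M n.
  by apply/imset2P; exists (Ordinal hM) (Ordinal hn).
case: q hq hc => [|[|//]] _ hc; first by have := hc _ eE.
pose s := take k (enum {: 'I_M + 'I_n}).
have us : uniq s by rewrite take_uniq // enum_uniq.
have ss : size s = k.
  by rewrite size_takel // -cardT card_sum !card_ord.
have hS : #|[set x in s]| = k by rewrite cardsE (card_uniqP us) ss.
have [V [F [ht hsub hp _]]] := hg _ hS.
pose i0 : 'I_l := Ordinal hl.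
pose d : ('I_M + 'I_n)%type := inl (Ordinal hM).
case: (ht i0) => _ hFE _ _ _.
have inS : forall j, j < k -> nth d s j \in V i0.
  by move=> j hj; apply: (subsetP (hsub i0)); rewrite inE mem_nth // ss.
apply: (@nomatch _ _ (V i0) (F i0) c (nth d s 0) (nth d s 1) (nth d s 2) (ht i0) (hp i0)).
- by move=> e he; have := hc e (subsetP hFE e he); lia.
- by apply: inS; lia.
- by apply: inS; lia.
- by apply: inS; lia.
- by rewrite nth_uniq // ss; lia.
- by rewrite nth_uniq // ss; lia.
- by rewrite nth_uniq // ss; lia.
Qed.

Lemma arith3 l k N x : 16 * l * k + 2 * k + 2 <= N -> x <= k -> l * (8 * k) <= N./2 - x.
Proof. move=> h1 h2; nia. Qed.

Theorem theorem3p2 (m : nat -> nat) (r : R)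
  (hr : (1 <= r)%R)
  (hm : bigO_pow m r)
  (hnm : forall n : nat, (n <= m n)%N)
  (k l : nat) (hk : (3 <= k)%N) (hl : (0 < l)%N) :
  exists N3 : nat, (0 < N3)%N /\
    forall n : nat, (N3 <= n)%N -> px_eq (K_edges (m n) n) k l 2.
Proof.
exists (16 * l * k + 2 * k + 2); split; first lia.
move=> n hn.
have hMn := hnm n.
move: (m n) hMn => M hMn.
have hn0 : 0 < n by lia.
have hM0 : 0 < M by lia.
split; last by apply: lower => //; lia.
exists (@col M n); split.
  by move=> e _; rewrite /col; case: odd.
move=> SS hS.
have inj : injective (@inl 'I_M 'I_n) by move=> a b [].
have inj' : injective (@inr 'I_M 'I_n) by move=> a b [].
apply: (construct (Ordinal hM0) (Ordinal hn0)).
- by rewrite hS; lia.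
- move=> b; rewrite /L /LA /LB hS; apply: leq_trans _ (size_fresh b (fun a : 'I_M => inl a \in SS)).
  apply: arith3; first lia.
  by rewrite -hS; apply: card_pre.
- move=> b; rewrite /L /LA /LB hS; apply: leq_trans _ (size_fresh b (fun a : 'I_n => inr a \in SS)).
  apply: arith3; first lia.
  by rewrite -hS; apply: card_pre.
Qed.
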